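(* Let $p,q$ be relatively prime non-zero integers with $q>0$ and $|p|>1$. (i) For $i\in\{1,\dots,|p|-1\}$ and $s\in\mathbb Z$, $$\varphi_i(s)-\varphi_{i-1}(s)=\begin{cases}1 & \text{if } i\equiv sq\pmod p,\\ -1 & \text{if } i\equiv (s+1)q\pmod p,\\ 0&\text{otherwise,}\end{cases}$$ and the two congruences $i\equiv sq$ and $i\equiv (s+1)q\pmod p$ are mutually exclusive. (ii) Let $g$ be a positive integer with $|p|\ge 2g+1$ and $\mu$ an integer with $0<\mu\le g$. Then for every $i\in\{1,\dots,|p|-1\}$, $$\sum_{|s|<\mu}\varphi_i(s)-\sum_{|s|<\mu}\varphi_{i-1}(s)=\begin{cases}1&\text{if } i\equiv(-\mu+1)q\pmod p,\\ -1 &\text{if } i\equiv \mu q\pmod p,\\ 0&\text{otherwise.}\end{cases}$$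
   Context: For relatively prime non-zero integers $p,q$ and $i\in\mathbb Z$, $\varphi_i(s)$ denotes the cardinality of the set $\{n\in\mathbb Z:\lfloor\frac{i+pn}{q}\rfloor=s\}$. *)

(* Defs.v *)
From HB Require Import structures.
From mathcomp Require Import all_boot all_order all_algebra.
From mathcomp Require Import finmap boolp classical_sets cardinality.
Set Implicit Arguments. Unset Strict Implicit. Unset Printing Implicit Defensive.
Import Order.TTheory GRing.Theory Num.Theory.
Local Open Scope ring_scope.
Local Open Scope classical_set_scope.

Definition phi_set (p q i s : int) : set int :=
  [set n : int | Num.floor (((i + p * n)%:~R : rat) / (q%:~R : rat)) = s].

(* phi_i(s) = cardinality of phi_set; the set is finite whenever q <> 0,
   and fset_set turns a finite classical set into a finite set. *)
Definition phi (p q i s : int) : nat := #|` fset_set (phi_set p q i s) |.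

(* Main.v *)
Require Import Defs.
From HB Require Import structures.
From mathcomp Require Import all_boot all_order all_algebra.
Import Order.TTheory GRing.Theory Num.Theory.
From mathcomp Require Import finmap boolp classical_sets cardinality zify ring.
Import Order.TTheory GRing.Theory Num.Theory.
Local Open Scope ring_scope.
Local Open Scope classical_set_scope.

Lemma finite_bounded (M : nat) : finite_set [set n : int | `|n| <= M%:Z].
Proof.
apply: (@sub_finite_set _ _ ((fun k : nat => k%:Z - M%:Z) @` `I_(M + M).+1)); last first.
  exact: finite_image.
move=> n /= hn; exists (absz (n + M%:Z)).
  rewrite /=; lia.
rewrite /=; lia.
Qed.

Definition Bset (p i a b : int) : set int := [set n : int | a < i + p * n < b].

Lemma finB p i a b : p != 0 -> finite_set (Bset p i a b).
Proof.
move=> hp.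
apply: (sub_finite_set _ (finite_bounded (absz i + absz a + absz b))).
move=> n /= /andP[h1 h2].
have hpn : `|n| <= `|p * n| by rewrite normrM; nia.
lia.
Qed.


Lemma card_add (p i a b c : int) : p != 0 -> ~ (a < c < b) ->
 #|` fset_set (Bset p i a b `|` [set n | i + p * n = c])| =
   addn (p %| c - i)%Z #|` fset_set (Bset p i a b)|.
Proof.
move=> hp hc.
have fB := finB p i a b hp.
case: (boolP (p %| c - i)%Z) => h.
  set n0 := ((c - i) %/ p)%Z.
  have e : i + p * n0 = c by rewrite mulrC divzK //; lia.
  have -> : Bset p i a b `|` [set n | i + p * n = c] = n0 |` Bset p i a b.
    apply/seteqP; split => n /=.
      case=> [hb|hn]; [by right|left].
      by apply: (mulfI hp); apply: (addrI i); rewrite hn e.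
    case=> [->|hb]; [by right|by left].
  rewrite fset_setU1 // cardfsU1 in_fset_set //.
  have -> : (n0 \in Bset p i a b) = false.
    by apply/negbTE/negP; rewrite in_setE /Bset /= e => hh; exact: hc.
  by [].
have -> : Bset p i a b `|` [set n | i + p * n = c] = Bset p i a b.
  apply/seteqP; split => n /=; last by left.
  case=> // hn; exfalso; move/negP: h; apply; apply/dvdzP; exists n.
  by rewrite -hn mulrC; ring.
by [].
Qed.

Lemma floor_charE (a q s : int) : 0 < q ->
  (Num.floor ((a%:~R : rat) / (q%:~R : rat)) = s) <-> (s * q <= a < (s + 1) * q).
Proof.
move=> hq.
have hq' : (0 : rat) < q%:~R by rewrite ltr0z.
have E : forall m : int, (m%:~R <= (a%:~R : rat) / q%:~R) = (m * q <= a).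
  by move=> m; rewrite ler_pdivlMr // -intrM ler_int.
have E2 : forall m : int, ((a%:~R : rat) / q%:~R < m%:~R) = (a < m * q).
  by move=> m; rewrite ltr_pdivrMr // -intrM ltr_int.
split.
  by move=> <-; have /andP[h1 h2] := floor_itv ((a%:~R : rat) / q%:~R); rewrite -E -E2 h1 h2.
by move=> /andP[h1 h2]; apply: floor_def; rewrite E E2 h1 h2.
Qed.

Lemma phiE (p q i s : int) : p != 0 -> 0 < q ->
  phi p q i s = addn (p %| s * q - i)%Z #|` fset_set (Bset p i (s * q) ((s + 1) * q))|.
Proof.
move=> hp hq.
rewrite /phi -card_add //; last by lia.
congr (#|` fset_set _|); apply/seteqP; split => n /=; rewrite /phi_set /= floor_charE //.
  move=> /andP[h1 h2].
  have [->|hne] := eqVneq (s * q) (i + p * n); first by right.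
  by left; apply/andP; split => //; rewrite lt_neqAle hne h1.
case=> [/andP[h1 h2]|hn].
  by rewrite (ltW h1) h2.
by rewrite -hn; apply/andP; split; lia.
Qed.

Lemma phiE' (p q i s : int) : p != 0 -> 0 < q ->
  phi p q (i - 1) s = addn (p %| (s + 1) * q - i)%Z #|` fset_set (Bset p i (s * q) ((s + 1) * q))|.
Proof.
move=> hp hq.
rewrite /phi -card_add //; last by lia.
congr (#|` fset_set _|); apply/seteqP; split => n /=; rewrite /phi_set /= floor_charE //.
  move=> /andP[h1 h2].
  have [hne|hne] := eqVneq (i + p * n) ((s + 1) * q); first by right.
  by left; move/eqP: hne => hne; apply/andP; split; lia.
case=> [/andP[h1 h2]|hn]; apply/andP; split; lia.
Qed.

Lemma modE (p i c : int) : (i == c %[mod p])%Z = (p %| c - i)%Z.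
Proof. by rewrite eqz_mod_dvd -rpredN opprB. Qed.

Lemma no_dvd (p q k : int) : coprimez p q -> 1 < `|p| -> 0 < k < `|p| ->
  ~~ (p %| k * q)%Z.
Proof.
move=> hc hp hk; rewrite Gauss_dvdzl // dvdzE.
apply/negP => /dvdn_leq h.
have : (0 < `|k|)%N by lia.
move/h; lia.
Qed.

Lemma diff1 (p q i s : int) : p != 0 -> 0 < q ->
  (phi p q i s)%:Z - (phi p q (i - 1) s)%:Z =
  (p %| s * q - i)%Z%:Z - (p %| (s + 1) * q - i)%Z%:Z.
Proof.
move=> hp hq; rewrite phiE // phiE' // !PoszD; ring.
Qed.

Lemma fin_if (b1 b2 : bool) : ~ (b1 /\ b2) ->
  (if b1 then 1 else if b2 then -1 else 0) = b1%:Z - b2%:Z :> int.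
Proof. by case: b1; case: b2 => //= h; exfalso; apply: h. Qed.

Lemma excl (p q i c d : int) : coprimez p q -> 1 < `|p| -> 0 < c - d < `|p| ->
  ~ ((p %| c * q - i)%Z /\ (p %| d * q - i)%Z).
Proof.
move=> hc hp hk [h1 h2].
have : (p %| (c - d) * q)%Z.
  have -> : (c - d) * q = (c * q - i) - (d * q - i) by ring.
  exact: rpredB.
by apply/negP; apply: no_dvd.
Qed.

Lemma telesc (u : nat -> int) (N : nat) :
  \sum_(k < N) (u k - u k.+1) = u 0%N - u N.
Proof.
elim: N => [|N IH]; first by rewrite big_ord0 subrr.
by rewrite big_ord_recr /= IH; ring.
Qed.

Local Close Scope classical_set_scope.
Local Open Scope ring_scope.

Theorem lemma3p2 (p q : int) (hcop : coprimez p q) (hp0 : p != 0) (hq0 : q != 0)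
  (hq : 0 < q) (hp : 1 < `|p|) :
  (forall (i s : int), 1 <= i <= `|p| - 1 ->
     ((phi p q i s)%:Z - (phi p q (i - 1) s)%:Z =
        (if (i == s * q %[mod p])%Z then 1
         else if (i == (s + 1) * q %[mod p])%Z then -1 else 0))
     /\ ~ ((i == s * q %[mod p])%Z /\ (i == (s + 1) * q %[mod p])%Z))
  /\
  (forall (g mu : int), 0 < g -> 2 * g + 1 <= `|p| -> 0 < mu <= g ->
     forall i : int, 1 <= i <= `|p| - 1 ->
       (\sum_(k < absz (2 * mu - 1)%R) (phi p q i (k%:Z - mu + 1))%:Z)
       - (\sum_(k < absz (2 * mu - 1)%R) (phi p q (i - 1) (k%:Z - mu + 1))%:Z)
       = (if (i == (- mu + 1) * q %[mod p])%Z then 1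
          else if (i == mu * q %[mod p])%Z then -1 else 0)).
Proof.
split.
  move=> i s _.
  have hx : ~ ((p %| (s + 1) * q - i)%Z /\ (p %| s * q - i)%Z).
    by apply: excl => //; lia.
  rewrite !modE; split; last by case=> a b; apply: hx.
  rewrite fin_if; first exact: diff1.
  by case=> a b; apply: hx.
move=> g mu hg hgp hmu i _.
rewrite -sumrB.
pose u (k : nat) : int := Posz (((k%:Z - mu + 1) * q - i) \in dvdz p).
have E : forall k : 'I_(absz (2 * mu - 1)%R),
  (phi p q i (k%:Z - mu + 1))%:Z - (phi p q (i - 1) (k%:Z - mu + 1))%:Z = u k - u k.+1.
  move=> k; rewrite diff1 // /u.
  by rewrite (_ : k%:Z - mu + 1 + 1 = (k.+1)%:Z - mu + 1) //; lia.
rewrite (eq_bigr _ (fun k _ => E k)) telesc /u.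
have hN : (absz (2 * mu - 1)%R)%:Z = 2 * mu - 1 by lia.
rewrite hN (_ : 0%:Z - mu + 1 = - mu + 1); last by lia.
rewrite (_ : 2 * mu - 1 - mu + 1 = mu); last by lia.
have hx : ~ ((p %| (- mu + 1) * q - i)%Z /\ (p %| mu * q - i)%Z).
  by move=> [a b]; apply: (excl p q i mu (- mu + 1) hcop hp); [lia | split].
by rewrite !modE fin_if.
Qed.
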